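(* Let $n\ge 1$ and $d\ge 1$ be integers, let $\mathcal{X}\subset\mathbb{R}^d$ be compact and convex, let $\mathbf{x}_0\in\mathcal{X}$, let $w_0,w_1,\dots,w_n\in\mathbb{R}$, and let $\mathbf{t}_1,\dots,\mathbf{t}_n\in\mathbb{R}^d$. Consider the $n$-player game $G$ in which player $i\in[n]$ chooses $\mathbf{x}_i\in\mathcal{X}$ and incurs the loss $\ell_i(\mathbf{x}_1,\dots,\mathbf{x}_n)=\|w_0\mathbf{x}_0+\sum_{j=1}^n w_j\mathbf{x}_j-\mathbf{t}_i\|_2^2$. Then $G$ has either exactly one pure Nash equilibrium or infinitely many pure Nash equilibria.
   Context: A pure Nash equilibrium of $G$ is a profile $\mathbf{x}=(\mathbf{x}_1,\dots,\mathbf{x}_n)\in\mathcal{X}^n$ such that $\ell_i(\mathbf{x}_i,\mathbf{x}_{-i})\le\ell_i(\mathbf{y},\mathbf{x}_{-i})$ for all $\mathbf{y}\in\mathcal{X}$ and all $i\in[n]$, where $(\mathbf{y},\mathbf{x}_{-i})$ denotes the profile with player $i$'s action replaced by $\mathbf{y}$. *)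

(* Defs.v *)
From HB Require Import structures.
From mathcomp Require Import all_boot all_order all_algebra.
From mathcomp Require Import all_classical all_reals all_analysis.
Set Implicit Arguments. Unset Strict Implicit. Unset Printing Implicit Defensive.
Import Order.TTheory GRing.Theory Num.Theory numFieldNormedType.Exports.
Local Open Scope classical_set_scope.
Local Open Scope ring_scope.

Definition sqnorm (R : realType) (d : nat) (v : 'rV[R]_d) : R :=
  \sum_(k < d) (v ord0 k) ^+ 2.

Definition upd (R : realType) (d n : nat) (x : {ffun 'I_n -> 'rV[R]_d})
  (i : 'I_n) (y : 'rV[R]_d) : {ffun 'I_n -> 'rV[R]_d} :=
  [ffun j => if j == i then y else x j].

(* Loss of player i (players indexed by 'I_n, i.e. 0..n-1 for 1..n):
   || w0 x0 + sum_j w_j x_j - t_i ||_2^2 *)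
Definition loss (R : realType) (d n : nat) (w0 : R) (x0 : 'rV[R]_d)
  (w : 'I_n -> R) (t : 'I_n -> 'rV[R]_d) (i : 'I_n)
  (x : {ffun 'I_n -> 'rV[R]_d}) : R :=
  sqnorm (w0 *: x0 + \sum_(j < n) w j *: x j - t i).

Definition pure_NE (R : realType) (d n : nat) (X : set 'rV[R]_d) (w0 : R)
  (x0 : 'rV[R]_d) (w : 'I_n -> R) (t : 'I_n -> 'rV[R]_d)
  : set {ffun 'I_n -> 'rV[R]_d} :=
  [set x : {ffun 'I_n -> 'rV[R]_d} | (forall i, X (x i)) /\
           forall i y, X y -> loss w0 x0 w t i x <= loss w0 x0 w t i (upd x i y)].

(* Main.v *)
Require Import Defs.
From HB Require Import structures.
From mathcomp Require Import all_boot all_order all_algebra.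
From mathcomp Require Import all_classical all_reals all_analysis.
From mathcomp Require Import ring lra.
Import Order.TTheory GRing.Theory Num.Theory numFieldNormedType.Exports.
Local Open Scope classical_set_scope.
Local Open Scope ring_scope.

Section Alg.
Variables (R : realType) (n d : nat) (w0 : R) (x0 : 'rV[R]_d)
  (w : 'I_n -> R) (t : 'I_n -> 'rV[R]_d).

Definition sk (x : 'I_n -> 'rV[R]_d) (k : 'I_d) : R :=
  w0 * x0 ord0 k + \sum_(j < n) w j * x j ord0 k.

Definition gg (i : 'I_n) (x : 'I_n -> 'rV[R]_d) (y : 'rV[R]_d) : R :=
  w i * \sum_(k < d) (sk x k - t i ord0 k) * (y ord0 k - x i ord0 k).

Definition hh (i : 'I_n) (x : 'I_n -> 'rV[R]_d) (y : 'rV[R]_d) : R :=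
  w i ^+ 2 * \sum_(k < d) (y ord0 k - x i ord0 k) ^+ 2.

Definition Phi (f : 'I_n -> 'rV[R]_d) : R :=
  \sum_(k < d) (sk f k) ^+ 2 -
  2 * \sum_(j < n) w j * \sum_(k < d) f j ord0 k * t j ord0 k.

Lemma loss_E i (x : {ffun 'I_n -> 'rV[R]_d}) :
  loss w0 x0 w t i x = \sum_(k < d) (sk x k - t i ord0 k) ^+ 2.
Proof.
rewrite /loss /sqnorm; apply: eq_bigr => k _.
rewrite !mxE summxE /sk; congr ((_ + _ - _) ^+ 2).
by apply: eq_bigr => j _; rewrite mxE.
Qed.

Lemma upd_ffE (x : {ffun 'I_n -> 'rV[R]_d}) i y j :
  upd x i y j = if j == i then y else x j.
Proof. by rewrite /upd ffunE. Qed.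

Lemma sk_upd (x : {ffun 'I_n -> 'rV[R]_d}) i y k :
  sk (upd x i y) k = sk x k + w i * (y ord0 k - x i ord0 k).
Proof.
rewrite /sk (bigD1 i) //= [in RHS](bigD1 i) //= upd_ffE eqxx.
have -> : \sum_(j < n | j != i) w j * upd x i y j ord0 k =
          \sum_(j < n | j != i) w j * x j ord0 k.
  by apply: eq_bigr => j /negbTE ji; rewrite upd_ffE ji.
ring.
Qed.

Lemma loss_upd (x : {ffun 'I_n -> 'rV[R]_d}) i y :
  loss w0 x0 w t i (upd x i y) = loss w0 x0 w t i x + 2 * gg i x y + hh i x y.
Proof.
rewrite !loss_E /gg /hh.
under eq_bigr do rewrite sk_upd.
rewrite !mulr_sumr -!big_split /=; apply: eq_bigr => k _; ring.
Qed.

Lemma Phi_upd (x : {ffun 'I_n -> 'rV[R]_d}) i y :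
  Phi (upd x i y) = Phi x + 2 * gg i x y + hh i x y.
Proof.
rewrite /Phi /gg /hh.
have -> : \sum_(j < n) w j * \sum_(k < d) upd x i y j ord0 k * t j ord0 k =
   \sum_(j < n) w j * \sum_(k < d) x j ord0 k * t j ord0 k +
   w i * \sum_(k < d) (y ord0 k - x i ord0 k) * t i ord0 k.
  rewrite (bigD1 i) //= [in RHS](bigD1 i) //= upd_ffE eqxx.
  have -> : \sum_(j < n | j != i) w j * \sum_(k < d) upd x i y j ord0 k * t j ord0 k =
          \sum_(j < n | j != i) w j * \sum_(k < d) x j ord0 k * t j ord0 k.
    by apply: eq_bigr => j /negbTE ji; rewrite upd_ffE ji.
  have -> : \sum_(k < d) y ord0 k * t i ord0 k = \sum_(k < d) x i ord0 k * t i ord0 k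
     + \sum_(k < d) (y ord0 k - x i ord0 k) * t i ord0 k.
    by rewrite -big_split; apply: eq_bigr => k _ /=; ring.
  ring.
under eq_bigr do rewrite sk_upd.
have -> : \sum_(k < d) (sk x k + w i * (y ord0 k - x i ord0 k)) ^+ 2 =
  \sum_(k < d) sk x k ^+ 2 +
  2 * (w i * \sum_(k < d) (sk x k - t i ord0 k) * (y ord0 k - x i ord0 k)) +
  w i ^+ 2 * \sum_(k < d) (y ord0 k - x i ord0 k) ^+ 2 +
  2 * (w i * \sum_(k < d) (y ord0 k - x i ord0 k) * t i ord0 k).
  by rewrite !mulr_sumr -!big_split /=; apply: eq_bigr => k _; ring.
ring.
Qed.

Lemma hh_ge0 i x y : 0 <= hh i x y.
Proof. by rewrite /hh mulr_ge0 ?sqr_ge0 // sumr_ge0 // => k _; rewrite sqr_ge0. Qed.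


Local Open Scope convex_scope.

Lemma conv_eq (a b : convex_lmodType 'rV[R]_d) (p : {i01 R}) :
  (a <| p |> b) = p%:num *: a + (1 - p%:num) *: b.
Proof. by []. Qed.

Variables (X : set 'rV[R]_d) (hXv : convex_set X).

Lemma convX (a b : 'rV[R]_d) (p : {i01 R}) : X a -> X b ->
  X (p%:num *: a + (1 - p%:num) *: b).
Proof.
move=> Xa Xb; have := hXv a b p (mem_set Xa) (mem_set Xb).
by rewrite conv_eq => /set_mem.
Qed.

Lemma VI_NE (x : {ffun 'I_n -> 'rV[R]_d}) :
  (forall i, X (x i)) -> (forall i y, X y -> 0 <= gg i x y) ->
  pure_NE X w0 x0 w t x.
Proof.
move=> Xx VI; split => // i y Xy.
rewrite loss_upd; have := VI i y Xy; have := hh_ge0 i x y; lra.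
Qed.

Lemma NE_VI (x : {ffun 'I_n -> 'rV[R]_d}) :
  pure_NE X w0 x0 w t x -> forall i y, X y -> 0 <= gg i x y.
Proof.
move=> [Xx NE] i y Xy.
rewrite leNgt; apply/negP => gneg.
set H := hh i x y.
have H0 : 0 <= H by exact: hh_ge0.
set a := - gg i x y.
have a0 : 0 < a by rewrite /a oppr_gt0.
have Ha0 : 0 < H + a by lra.
set e := a / (H + a).
have e0 : 0 < e by rewrite /e divr_gt0.
have e1 : e <= 1 by rewrite /e ler_pdivrMr // mul1r; lra.
have eHa : e * (H + a) = a by rewrite /e mulfVK // gt_eqF.
pose p : {i01 R} := Itv01 (ltW e0) e1.
pose ye := p%:num *: y + (1 - p%:num) *: x i.
have Xye : X ye by apply: convX.
have := NE i ye Xye; rewrite loss_upd.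
have -> : gg i x ye = e * gg i x y.
  rewrite /gg mulrCA; congr (_ * _); rewrite mulr_sumr; apply: eq_bigr => k _.
  rewrite /ye !mxE /=; ring.
have -> : hh i x ye = e ^+ 2 * H.
  rewrite /H /hh mulrCA; congr (_ * _); rewrite mulr_sumr; apply: eq_bigr => k _.
  rewrite /ye !mxE /=; ring.
have ga : gg i x y = - a by rewrite /a opprK.
rewrite ga => h.
have : 0 <= e * (- 2 * a + e * H) by nra.
nra.
Qed.


Lemma NE_sk (a b : {ffun 'I_n -> 'rV[R]_d}) :
  pure_NE X w0 x0 w t a -> pure_NE X w0 x0 w t b -> forall k, sk a k = sk b k.
Proof.
move=> NEa NEb.
have Ha := NE_VI _ NEa; have Hb := NE_VI _ NEb.
have S0 : 0 <= \sum_(i < n) (gg i a (b i) + gg i b (a i)).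
  apply: sumr_ge0 => i _; apply: addr_ge0.
    by apply: Ha; case: NEb.
  by apply: Hb; case: NEa.
have E : \sum_(i < n) (gg i a (b i) + gg i b (a i)) =
         - \sum_(k < d) (sk a k - sk b k) ^+ 2.
  rewrite /gg -sumrN.
  under eq_bigr do rewrite !mulr_sumr -big_split /=.
  rewrite exchange_big /=; apply: eq_bigr => k _.
  have F : \sum_(i < n) w i * (b i ord0 k - a i ord0 k) = sk b k - sk a k.
    rewrite /sk; under eq_bigr do rewrite mulrBr.
    rewrite sumrB; ring.
  have -> : \sum_(i < n) (w i * ((sk a k - t i ord0 k) * (b i ord0 k - a i ord0 k)) +
     w i * ((sk b k - t i ord0 k) * (a i ord0 k - b i ord0 k))) =
     (sk a k - sk b k) * \sum_(i < n) w i * (b i ord0 k - a i ord0 k).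
    by rewrite mulr_sumr; apply: eq_bigr => i _; ring.
  rewrite F; ring.
have S1 : \sum_(k < d) (sk a k - sk b k) ^+ 2 = 0.
  apply/eqP; rewrite eq_le sumr_ge0 ?andbT; last by move=> k _; rewrite sqr_ge0.
  by rewrite -oppr_ge0 -E.
move=> k; have h := psumr_eq0P _ S1.
have /eqP := h (fun k _ => sqr_ge0 (sk a k - sk b k)) k isT.
by rewrite sqrf_eq0 subr_eq0 => /eqP.
Qed.

Definition cc (a b : {ffun 'I_n -> 'rV[R]_d}) (p : R) : {ffun 'I_n -> 'rV[R]_d} :=
  [ffun i => p *: b i + (1 - p) *: a i].

Lemma cc_NE (a b : {ffun 'I_n -> 'rV[R]_d}) (p : {i01 R}) :
  pure_NE X w0 x0 w t a -> pure_NE X w0 x0 w t b ->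
  pure_NE X w0 x0 w t (cc a b p%:num).
Proof.
move=> NEa NEb; have Eab := NE_sk _ _ NEa NEb.
have Ha := NE_VI _ NEa; have Hb := NE_VI _ NEb.
have p0 : 0 <= p%:num by [].
have p1 : p%:num <= 1 by [].
apply: VI_NE => [i|i y Xy].
  rewrite ffunE; apply: convX; [by case: NEb | by case: NEa].
have Ec : forall k, sk (cc a b p%:num) k = sk a k.
  move=> k.
  have -> : sk (cc a b p%:num) k = p%:num * sk b k + (1 - p%:num) * sk a k.
    rewrite /sk.
    have -> : \sum_(j < n) w j * cc a b p%:num j ord0 k =
       p%:num * \sum_(j < n) w j * b j ord0 k + (1 - p%:num) * \sum_(j < n) w j * a j ord0 k.
      rewrite !mulr_sumr -big_split /=; apply: eq_bigr => j _.
      rewrite /cc ffunE !mxE; ring.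
    ring.
  rewrite -Eab; ring.
have -> : gg i (cc a b p%:num) y = p%:num * gg i b y + (1 - p%:num) * gg i a y.
  rewrite /gg.
  have -> : \sum_(k < d) (sk (cc a b p%:num) k - t i ord0 k) * (y ord0 k - cc a b p%:num i ord0 k) =
     p%:num * \sum_(k < d) (sk b k - t i ord0 k) * (y ord0 k - b i ord0 k) +
     (1 - p%:num) * \sum_(k < d) (sk a k - t i ord0 k) * (y ord0 k - a i ord0 k).
    rewrite !mulr_sumr -big_split /=; apply: eq_bigr => k _.
    rewrite Ec -Eab /cc ffunE !mxE; ring.
  ring.
have := Ha i y Xy; have := Hb i y Xy => hb ha.
apply: addr_ge0; apply: mulr_ge0 => //; lra.
Qed.

Lemma cc_inj (a b : {ffun 'I_n -> 'rV[R]_d}) (p q : R) :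
  a != b -> cc a b p = cc a b q -> p = q.
Proof.
move=> ab E.
have [i abi] : exists i, a i != b i.
  apply/existsP; apply: contraR ab => /existsPn H.
  by apply/eqP/ffunP => i; apply/eqP; have := H i; rewrite negbK.
have [k abk] : exists k, a i ord0 k != b i ord0 k.
  apply/existsP; apply: contraR abi => /existsPn H.
  apply/eqP/matrixP => r k; rewrite (ord1 r); apply/eqP; have := H k; rewrite negbK.
  done.
have := congr1 (fun f : {ffun 'I_n -> 'rV[R]_d} => f i ord0 k) E.
rewrite /cc /= !ffunE !mxE => h.
have : (p - q) * (b i ord0 k - a i ord0 k) = 0 by rewrite mulrBl !mulrBr; lra.
move/eqP; rewrite mulf_eq0 => /orP[|]; first by rewrite subr_eq0 => /eqP.
by rewrite subr_eq0 eq_sym (negbTE abk).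
Qed.

End Alg.
Arguments Phi {R n d} w0 x0 w t f.
Arguments sk {R n d} w0 x0 w x k.
Arguments cc {R n d} a b p.

Import ArrowAsProduct.

Lemma cont_sum (T : topologicalType) (R : realType) m (F : 'I_m -> T -> R) :
  (forall i, continuous (F i)) -> continuous (fun x => \sum_(i < m) F i x).
Proof.
elim: m F => [|m IH] F cF.
  under eq_fun do rewrite big_ord0. exact: cst_continuous.
under eq_fun do rewrite big_ord_recr /=.
move=> x; apply: continuousD; last exact: cF.
by apply: (IH (fun i => F (widen_ord (leqnSn m) i))).
Qed.

Lemma cont_M (T : topologicalType) (R : realType) (f g : T -> R) :
  continuous f -> continuous g -> continuous (fun x => f x * g x).
Proof. by move=> cf cg x; apply: continuousM; [exact: cf | exact: cg]. Qed.

Lemma cont_B (T : topologicalType) (R : realType) (f g : T -> R) :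
  continuous f -> continuous g -> continuous (fun x => f x - g x).
Proof. by move=> cf cg x; apply: continuousB; [exact: cf | exact: cg]. Qed.

Lemma cont_D (T : topologicalType) (R : realType) (f g : T -> R) :
  continuous f -> continuous g -> continuous (fun x => f x + g x).
Proof. by move=> cf cg x; apply: continuousD; [exact: cf | exact: cg]. Qed.

Lemma cont_cst (T : topologicalType) (R : realType) (c : R) :
  continuous (fun _ : T => c).
Proof. exact: cst_continuous. Qed.

Section Exist.
Variables (R : realType) (n d : nat) (w0 : R) (x0 : 'rV[R]_d)
  (w : 'I_n -> R) (t : 'I_n -> 'rV[R]_d).
Local Notation TT := (forall i : 'I_n, (fun _ : 'I_n => 'rV[R]_d) i).

Lemma cont_coord j k : continuous (fun f : TT => f j ord0 k).
Proof.
move=> f.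
have := @continuous_comp _ _ _ (@proj _ (fun _ : 'I_n => 'rV[R]_d) j)
  (fun M : 'rV[R]_d => M ord0 k) f (@proj_continuous _ _ j f)
  (@coord_continuous R 1 d ord0 k _).
by [].
Qed.

Lemma cont_sk k : continuous (fun f : TT => sk w0 x0 w f k).
Proof.
rewrite /sk; apply: cont_D; first exact: cont_cst.
apply: cont_sum => j; apply: cont_M; first exact: cont_cst.
exact: cont_coord.
Qed.

Lemma cont_Phi : continuous (fun f : TT => Phi w0 x0 w t f).
Proof.
rewrite /Phi.
apply: cont_B.
  apply: cont_sum => k.
  exact: (@cont_M _ _ _ _ (cont_sk k) (cont_sk k)).
apply: cont_M; first exact: cont_cst.
apply: cont_sum => j; apply: cont_M; first exact: cont_cst.
apply: cont_sum => k; apply: cont_M; [exact: cont_coord| exact: cont_cst].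
Qed.

Lemma NE_exists (X : set 'rV[R]_d) : compact X -> X x0 ->
  exists x, pure_NE X w0 x0 w t x.
Proof.
move=> cX Xx0.
pose K := [set f : TT | forall i, X (f i)].
have cK : compact K := @tychonoff _ (fun _ : 'I_n => 'rV[R]_d) (fun _ => X) (fun _ => cX).
have K0 : K !=set0 by exists (fun _ => x0).
have [m /set_mem Km minm] := compact_EVT_min K0 cK (continuous_subspaceT cont_Phi).
exists [ffun i => m i]; split => [i|i y Xy]; first by rewrite ffunE.
set x := [ffun i => m i].
have Phix : Phi w0 x0 w t x = Phi w0 x0 w t m.
  by congr Phi; apply: funext => j; rewrite ffunE.
suff : Phi w0 x0 w t x <= Phi w0 x0 w t (upd x i y).
  by rewrite Phi_upd loss_upd; lra.
rewrite Phix; apply: minm; apply: mem_set => j /=.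
by rewrite upd_ffE; case: eqP => _ //; rewrite ffunE.
Qed.
End Exist.

Theorem corollary1 (R : realType) (n d : nat) (hn : (0 < n)%N) (hd : (0 < d)%N)
  (X : set 'rV[R]_d) (hXc : compact X) (hXv : convex_set X)
  (x0 : 'rV[R]_d) (hx0 : X x0) (w0 : R) (w : 'I_n -> R) (t : 'I_n -> 'rV[R]_d) :
  (exists x, pure_NE X w0 x0 w t = [set x]) \/ infinite_set (pure_NE X w0 x0 w t).
Proof.
have [m NEm] := @NE_exists R n d w0 x0 w t X hXc hx0.
case: (pselect (exists b, pure_NE X w0 x0 w t b /\ b != m)) => [[b [NEb bm]]|nob].
  right; apply/infiniteP.
  have lam_ge0 (k : nat) : 0 <= (k.+1%:R : R)^-1 by rewrite invr_ge0 ler0n.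
  have lam_le1 (k : nat) : (k.+1%:R : R)^-1 <= 1 by rewrite invf_le1 ?ltr0Sn // ler1n.
  have : $|{injfun [set: nat] >-> pure_NE X w0 x0 w t}|.
    apply/injfunPex; exists (fun k => cc m b (k.+1%:R : R)^-1).
      move=> k _.
      exact: (@cc_NE R n d w0 x0 w t X hXv m b (Itv01 (lam_ge0 k) (lam_le1 k)) NEm NEb).
    move=> k1 k2 _ _ E.
    have := @cc_inj R n d m b _ _ _ E.
    rewrite eq_sym bm => /(_ isT) /invr_inj /eqP.
    by rewrite eqr_nat => /eqP [].
  by case => F; exact: inj_card_le F.
left; exists m; apply/seteqP; split => [x NEx|x ->] //=.
apply: contra_notP nob => xm; exists x; split => //.
by apply/eqP.
Qed.
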